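(* Suppose that $\mathbf P\big(\min(\eta(X),1-\eta(X))\le\varepsilon\big)>0$ for every $\varepsilon>0$. Then, for any choice of the thresholds $\tau_\gamma$ (as described below), $\lim_{\gamma\to1^-}\tau_\gamma=1$, and $\mathcal R^*:=\lim_{\gamma\to1^-}\mathcal R(\gamma)=0$.
   Context: Setup (binary classification with indecisions). $(\mathcal X,\mathcal U)$ is a measurable space with a $\sigma$-finite measure $\mu$; $P_1\neq P_2$ are probability measures with densities $f_1,f_2$ w.r.t. $\mu$; $p_1,p_2>0$, $p_1+p_2=1$; $\mathbf P(Y=i)=p_i$ and given $Y=i$, $X\sim P_i$. A classifier is a measurable $\tilde Y(X,U)\in\{0,1,2\}$ with $U\sim\mathrm{Unif}[0,1]$ independent of $(X,Y)$; $0$ means indecision. $\eta(x)=\frac{p_1f_1(x)}{p_1f_1(x)+p_2f_2(x)}$. $\mathcal R(\gamma):=\inf\mathbf P(\tilde Y\neq Y\mid\tilde Y\neq0)$ over classifiers with $\mathbf P(\tilde Y=0)=\gamma$; $\gamma\mapsto\mathcal R(\gamma)$ is non-increasing and nonnegative on $[0,1)$. For $\gamma\in[0,1)$, $\tau_\gamma\in[1/2,1]$ denotes a threshold for which there is a classifier $Y^*_\gamma$ with $\mathbf P(Y^*_\gamma=0)=\gamma$, a.s. $\{1-\tau_\gamma<\eta(X)<\tau_\gamma\}\subset\{Y^*_\gamma=0\}\subset\{1-\tau_\gamma\le\eta(X)\le\tau_\gamma\}$, and $Y^*_\gamma=\arg\max_i p_if_i(X)$ on $\{Y^*_\gamma\neq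 0\}$; such $Y^*_\gamma$ attains $\mathcal R(\gamma)$. *)

(* Defs.v *)
From HB Require Import structures.
From mathcomp Require Import all_boot all_order all_algebra.
From mathcomp Require Import all_classical all_reals all_analysis.
Set Implicit Arguments. Unset Strict Implicit. Unset Printing Implicit Defensive.
Import Order.TTheory GRing.Theory Num.Theory.
Import numFieldNormedType.Exports.
Local Open Scope classical_set_scope.
Local Open Scope ring_scope.

Section Setup.
Context {d : measure_display} {T : measurableType d} {R : realType}.
Variables (mu : {measure set T -> \bar R}) (f1 f2 : T -> R) (p1 p2 : R).

Definition pf (i : nat) (x : T) : R :=
  if i == 1%N then p1 * f1 x else if i == 2%N then p2 * f2 x else 0.

(* eta(x) = p1 f1 / (p1 f1 + p2 f2)  (= 0 where the denominator is 0, a P-null set) *)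
Definition eta_reg (x : T) : R := p1 * f1 x / (p1 * f1 x + p2 * f2 x).

Definition probX (A : set T) : \bar R :=
  (\int[mu]_(x in A) (p1 * f1 x + p2 * f2 x)%:E)%E.

Definition unif01 (B : set R) : \bar R :=
  lebesgue_measure (B `&` `[0%R, 1%R]).

(* P(Y = i, (X,U) in A), with U independent of (X,Y) *)
Definition probYXU (i : nat) (A : set (T * R)) : \bar R :=
  (\int[mu]_x ((pf i x)%:E * unif01 [set u | A (x, u)]))%E.

Definition probXU (A : set (T * R)) : \bar R :=
  (probYXU 1 A + probYXU 2 A)%E.

(* a (randomized) classifier: measurable map (x,u) |-> {0,1,2}, 0 = indecision *)
Definition is_classifier (g : T * R -> nat) : Prop :=
  (forall k : nat, measurable (g @^-1` [set k])) /\ (forall z, (g z <= 2)%N).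

Definition P0 (g : T * R -> nat) : \bar R := probXU [set z | g z = 0%N].
Definition Pnz (g : T * R -> nat) : \bar R := probXU [set z | g z <> 0%N].
(* P(Ytilde <> Y, Ytilde <> 0) *)
Definition Perr (g : T * R -> nat) : \bar R :=
  (probYXU 1 [set z | g z = 2%N] + probYXU 2 [set z | g z = 1%N])%E.
Definition cond_err (g : T * R -> nat) : \bar R :=
  (fine (Perr g) / fine (Pnz g))%:E.

Definition Rcal (gamma : R) : \bar R :=
  ereal_inf [set cond_err g | g in [set g | is_classifier g /\ P0 g = gamma%:E]].

Definition is_threshold (gamma t : R) : Prop :=
  2^-1 <= t <= 1 /\
  exists g, is_classifier g /\ P0 g = gamma%:E /\
    probXU [set z | 1 - t < eta_reg z.1 < t /\ g z <> 0%N] = 0%E /\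
    probXU [set z | g z = 0%N /\ ~ (1 - t <= eta_reg z.1 <= t)] = 0%E /\
    (* a.s. on {g <> 0}, g = argmax_i p_i f_i(X) *)
    probXU [set z | g z = 1%N /\ p1 * f1 z.1 < p2 * f2 z.1] = 0%E /\
    probXU [set z | g z = 2%N /\ p2 * f2 z.1 < p1 * f1 z.1] = 0%E.

End Setup.

(* Main.v *)
Require Import Defs.
From HB Require Import structures.
From mathcomp Require Import all_boot all_order all_algebra.
From mathcomp Require Import all_classical all_reals all_analysis.
From mathcomp Require Import measurable_realfun lra.
Import Order.TTheory GRing.Theory Num.Theory.
Import numFieldNormedType.Exports.
Local Open Scope classical_set_scope.
Local Open Scope ring_scope.
Lemma inv_meas (R : realType) : measurable_fun [set: R] (@GRing.inv R).
Proof.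
have -> : [set: R] = ~` [set 0%R] `|` [set 0%R] by rewrite setvU.
apply/measurable_funU => //.
  exact: measurableC.
split; last exact: measurable_fun_set1.
apply: open_continuous_measurable_fun.
  by apply: closed_openC; apply: accessible_closed_set1; apply: hausdorff_accessible; exact: Rhausdorff.
move=> x; rewrite inE /= => /eqP x0; exact: inv_continuous.
Qed.

Lemma key0 (R : realType) (a b t : R) : 0 <= a -> 0 <= b -> 2^-1 <= t <= 1 ->
  (1-t)*(a+b) < a -> (1-t)*(a+b) < b -> 1 - t < a/(a+b) < t.
Proof.
move=> a0 b0 /andP[t1 t2] ha hb.
have hw : 0 < a + b by nra.
have he : a / (a+b) * (a+b) = a by rewrite divfK // gt_eqF.
set e := a / (a+b) in he *.
apply/andP; split; nra.
Qed.

Section S.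
Context (d : measure_display) (T : measurableType d) (R : realType)
  (mu : {measure set T -> \bar R}) (f1 f2 : T -> R) (p1 p2 : R).
Hypothesis (mf1 : measurable_fun setT f1) (mf2 : measurable_fun setT f2)
  (f1ge0 : forall x, 0 <= f1 x) (f2ge0 : forall x, 0 <= f2 x)
  (int1 : (\int[mu]_x (f1 x)%:E = 1)%E) (int2 : (\int[mu]_x (f2 x)%:E = 1)%E)
  (p1gt0 : 0 < p1) (p2gt0 : 0 < p2) (p12 : p1 + p2 = 1).

Definition w x := p1 * f1 x + p2 * f2 x.
Definition phi (A : set (T * R)) (x : T) : \bar R := unif01 [set u | A (x, u)].

Lemma w_ge0 x : 0 <= w x.
Proof. by rewrite /w addr_ge0 // mulr_ge0 // ltW. Qed.

Lemma mw : measurable_fun setT w.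
Proof.
apply: measurable_funD; apply: measurable_funM => //; exact: measurable_cst.
Qed.

Lemma meta : measurable_fun setT (eta_reg f1 f2 p1 p2).
Proof.
apply: measurable_funM.
  apply: measurable_funM => //; exact: measurable_cst.
exact: (measurableT_comp (@inv_meas R) mw).
Qed.

Lemma phi_meas A : measurable A -> measurable_fun setT (phi A).
Proof.
move=> mA.
have mB : measurable (A `&` (setT `*` `[0%R, 1%R])).
  apply: measurableI => //; apply: measurableX => //.
have := measurable_fun_xsection (@lebesgue_measure R) mB.
apply: eq_measurable_fun => x _ /=; rewrite /phi /unif01.
congr (lebesgue_measure _).
apply/seteqP; split => u; rewrite /xsection /=.
  by rewrite inE /= => -[Au [_ H]]; split.
by rewrite inE /= => -[Au H]; split.
Qed.

Lemma unif01_T : @unif01 R setT = 1%E.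
Proof.
by rewrite /unif01 setTI lebesgue_measure_itv /= lte_fin ltr01 -EFinB subr0.
Qed.

Lemma phi_ge0 A x : (0 <= phi A x)%E.
Proof. exact: measure_ge0. Qed.

Lemma msec (A : set (T * R)) x : measurable A -> measurable ([set u | A (x, u)] `&` `[0%R, 1%R]) :> Prop.
Proof.
move=> mA; apply: measurableI => //.
have := measurable_xsection x mA.
by congr measurable; apply/seteqP; split => u; rewrite /xsection /= ?inE.
Qed.

Lemma phi_le1 A x : measurable A -> (phi A x <= 1)%E.
Proof.
move=> mA; rewrite -unif01_T /phi /unif01.
apply: le_measure; rewrite ?inE //; first exact: msec.
  by rewrite setTI.
exact: setSI.
Qed.

Lemma phi_sub A B C x : measurable A -> measurable B -> measurable C ->
  (forall u, A (x, u) -> B (x, u) \/ C (x, u)) -> (phi A x <= phi B x + phi C x)%E.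
Proof.
move=> mA mB mC ABC; rewrite /phi /unif01.
apply: le_trans (@measureU2 _ _ _ (@lebesgue_measure R) _ _ (msec _ x mB) (msec _ x mC)).
apply: le_measure; rewrite ?inE //; first exact: msec.
  by apply: measurableU; exact: msec.
move=> u [/ABC [Bu|Cu] Iu]; [left|right]; by split.
Qed.

Lemma phi_disj A B x : measurable A -> measurable B -> A `&` B = set0 ->
  (phi A x + phi B x = phi (A `|` B) x)%E.
Proof.
move=> mA mB AB; rewrite /phi /unif01.
rewrite -measureU; [|exact: msec|exact: msec|].
  congr (lebesgue_measure _); apply/seteqP; split => u /=.
    by move=> [[Au Iu]|[Bu Iu]]; split => //; [left|right].
  by move=> [[Au|Bu] Iu]; [left|right].
apply/seteqP; split => u //= [[Au _] [Bu _]].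
by have : (A `&` B) (x, u) by []; rewrite AB.
Qed.

Lemma phi_cyl (C : set T) x : phi [set z | C z.1] x = if x \in C then 1%E else 0%E.
Proof.
rewrite /phi; case: (boolP (x \in C)) => [/set_mem Cx|/negP]; last rewrite in_setE => Cx.
  by rewrite -unif01_T; congr unif01; apply/seteqP; split.
rewrite /unif01 -(measure0 (@lebesgue_measure R)); congr lebesgue_measure.
by apply/seteqP; split => u // [].
Qed.


Definition I (h : T -> \bar R) := (\int[mu]_x ((w x)%:E * h x))%E.

Lemma mwE : measurable_fun setT (fun x => (w x)%:E).
Proof. exact/measurable_EFinP/mw. Qed.

Lemma mfE (p : R) (f : T -> R) : measurable_fun setT f -> measurable_fun setT (fun x => (p * f x)%:E).
Proof. move=> mf; apply/measurable_EFinP; apply: measurable_funM => //; exact: measurable_cst. Qed.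

Lemma I_le h1 h2 : measurable_fun setT h1 -> measurable_fun setT h2 ->
  (forall x, 0 <= h1 x)%E -> (forall x, h1 x <= h2 x)%E -> (I h1 <= I h2)%E.
Proof.
move=> m1 m2 h0 h12; apply: ge0_le_integral => //.
- by move=> x _; rewrite mule_ge0 // lee_fin w_ge0.
- exact: emeasurable_funM mwE m1.
- exact: emeasurable_funM mwE m2.
- by move=> x _; rewrite lee_wpmul2l // lee_fin w_ge0.
Qed.

Lemma I_add h1 h2 : measurable_fun setT h1 -> measurable_fun setT h2 ->
  (forall x, 0 <= h1 x)%E -> (forall x, 0 <= h2 x)%E ->
  I (fun x => h1 x + h2 x)%E = (I h1 + I h2)%E.
Proof.
move=> m1 m2 h10 h20; rewrite /I -ge0_integralD //.
- by apply: eq_integral => x _; rewrite ge0_muleDr.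
- by move=> x _; rewrite mule_ge0 // lee_fin w_ge0.
- exact: emeasurable_funM mwE m1.
- by move=> x _; rewrite mule_ge0 // lee_fin w_ge0.
- exact: emeasurable_funM mwE m2.
Qed.

Lemma I_scale (c : R) h : 0 <= c -> measurable_fun setT h -> (forall x, 0 <= h x)%E ->
  (\int[mu]_x (c%:E * ((w x)%:E * h x)) = c%:E * I h)%E.
Proof.
move=> c0 mh h0; rewrite /I ge0_integralZl //.
- exact: emeasurable_funM mwE mh.
- by move=> x _; rewrite mule_ge0 // lee_fin w_ge0.
Qed.

Lemma I_one : I (fun _ => 1%E) = 1%E.
Proof.
rewrite /I.
under eq_integral => x _ do rewrite mule1 /w EFinD.
rewrite ge0_integralD //; last first.
- exact: mfE.
- by move=> x _; rewrite lee_fin mulr_ge0 // ltW.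
- exact: mfE.
- by move=> x _; rewrite lee_fin mulr_ge0 // ltW.
under eq_integral => x _ do rewrite EFinM.
rewrite ge0_integralZl_EFin //; last first.
- exact: ltW.
- exact/measurable_EFinP.
- by move=> x _; rewrite lee_fin.
rewrite int1 mule1; under eq_integral => x _ do rewrite EFinM.
rewrite ge0_integralZl_EFin //; last first.
- exact: ltW.
- exact/measurable_EFinP.
- by move=> x _; rewrite lee_fin.
by rewrite int2 mule1 -EFinD p12.
Qed.

Lemma pY1 A : probYXU mu f1 f2 p1 p2 1 A = (\int[mu]_x ((p1 * f1 x)%:E * phi A x))%E.
Proof. by []. Qed.

Lemma pY2 A : probYXU mu f1 f2 p1 p2 2 A = (\int[mu]_x ((p2 * f2 x)%:E * phi A x))%E.
Proof. by []. Qed.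

Lemma probXU_I A : measurable A -> probXU mu f1 f2 p1 p2 A = I (phi A).
Proof.
move=> mA; rewrite /probXU pY1 pY2 /I -ge0_integralD //.
- by apply: eq_integral => x _; rewrite /w EFinD ge0_muleDl // lee_fin mulr_ge0 // ltW.
- by move=> x _; rewrite mule_ge0 // ?phi_ge0 // lee_fin mulr_ge0 // ltW.
- exact: emeasurable_funM (mfE _ _ mf1) (phi_meas _ mA).
- by move=> x _; rewrite mule_ge0 // ?phi_ge0 // lee_fin mulr_ge0 // ltW.
- exact: emeasurable_funM (mfE _ _ mf2) (phi_meas _ mA).
Qed.

Lemma probX_I S : measurable S -> probX mu f1 f2 p1 p2 S = I (phi [set z | S z.1]).
Proof.
move=> mS; rewrite /probX /I integral_mkcond; apply: eq_integral => x _.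
by rewrite patchE phi_cyl; case: ifP; rewrite ?mule1 ?mule0.
Qed.

Lemma mcyl (S : set T) : measurable S -> measurable ([set z | S z.1] : set (T * R)).
Proof.
move=> mS; have -> : ([set z | S z.1] : set (T * R)) = S `*` setT.
  by apply/seteqP; split => z //= [].
exact: measurableX.
Qed.

Lemma phi_mono A B x : measurable A -> measurable B ->
  (forall u, A (x, u) -> B (x, u)) -> (phi A x <= phi B x)%E.
Proof.
move=> mA mB AB; have := phi_sub A B set0 x mA mB measurable0.
rewrite /phi /unif01 set0I measure0 adde0; apply => u /AB; by left.
Qed.

Lemma mcylI (P : T -> Prop) (G : set (T * R)) : measurable [set x | P x] -> measurable G ->
  measurable [set z | P z.1 /\ G z].
Proof. by move=> mP mG; exact: measurableI (mcyl _ mP) mG. Qed.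

Lemma mcylI' (P : T -> Prop) (G : set (T * R)) : measurable [set x | P x] -> measurable G ->
  measurable [set z | G z /\ P z.1].
Proof. by move=> mP mG; exact: measurableI mG (mcyl _ mP). Qed.

Lemma m_ltf (a b : T -> R) : measurable_fun setT a -> measurable_fun setT b ->
  measurable [set x | a x < b x].
Proof.
move=> ma mb; have := measurable_fun_ltr ma mb measurableT; move=> /(_ [set true] Logic.I).
by rewrite setTI; congr measurable; apply/seteqP; split => x /=.
Qed.

Lemma m_eta_itv (i : interval R) : measurable [set x | eta_reg f1 f2 p1 p2 x \in i].
Proof.
have := meta measurableT; move=> /(_ _ (measurable_itv i)).
by rewrite setTI; congr measurable; apply/seteqP; split => x /=; rewrite inE.
Qed.

Lemma phi_T x : phi setT x = 1%E.
Proof. exact: unif01_T. Qed.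

Lemma Pnz_eq g (ga : R) : is_classifier g -> P0 mu f1 f2 p1 p2 g = ga%:E ->
  Pnz mu f1 f2 p1 p2 g = (1 - ga)%:E.
Proof.
move=> [mg _] hP0.
have m0 : measurable [set z : T * R | g z = 0%N] := mg 0%N.
have mnz : measurable [set z : T * R | g z <> 0%N].
  by have := measurableC m0; congr measurable.
have H : (Pnz mu f1 f2 p1 p2 g + P0 mu f1 f2 p1 p2 g = 1)%E.
  rewrite /Pnz /P0 !probXU_I // -I_add; try exact: phi_meas; try (by move=> x; exact: phi_ge0).
  rewrite -I_one; congr I; apply: funext => x.
  rewrite phi_disj //; last first.
    by apply/seteqP; split => z // [/= ? ?].
  rewrite -(phi_T x); congr phi; apply/seteqP; split => z // _ /=.
  by case: (eqVneq (g z) 0%N) => [->|/eqP]; [right|left].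
move: H; rewrite hP0.
have : (0 <= Pnz mu f1 f2 p1 p2 g)%E.
  rewrite /Pnz probXU_I //; apply: integral_ge0 => x _.
  by rewrite mule_ge0 ?phi_ge0 // lee_fin w_ge0.
case: (Pnz _ _ _ _ _ _) => [r||] // _.
by rewrite -EFinD => -[H]; congr EFin; lra.
Qed.

Lemma bound_int (c : R) (f : T -> R) G N M : 0 <= c ->
  measurable G -> measurable N -> measurable M ->
  (forall x, 0 <= f x) -> measurable_fun setT f ->
  I (phi N) = 0%E -> I (phi M) = 0%E ->
  (forall x, (f x)%:E * phi G x <= c%:E * ((w x)%:E * phi G x) + (w x)%:E * (phi N x + phi M x))%E ->
  (\int[mu]_x ((f x)%:E * phi G x) <= c%:E * I (phi G))%E.
Proof.
move=> c0 mG mN mM f0 mf IN IM hle.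
have mwG : measurable_fun setT (fun x => (w x)%:E * phi G x)%E.
  exact: emeasurable_funM mwE (phi_meas _ mG).
have mNM : measurable_fun setT (fun x => phi N x + phi M x)%E.
  exact: emeasurable_funD (phi_meas _ mN) (phi_meas _ mM).
apply: (@le_trans _ _ (\int[mu]_x (c%:E * ((w x)%:E * phi G x) + (w x)%:E * (phi N x + phi M x)))%E).
  apply: ge0_le_integral => //.
  - by move=> x _; rewrite mule_ge0 ?phi_ge0 // lee_fin.
  - apply: emeasurable_funM (phi_meas _ mG).
    exact/measurable_EFinP.
  - apply: emeasurable_funD.
      by apply: emeasurable_funM => //; exact: measurable_cst.
    exact: emeasurable_funM mwE mNM.
rewrite ge0_integralD //.
- rewrite I_scale //; try exact: phi_meas; try (by move=> x; exact: phi_ge0).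
  have -> : (\int[mu]_x ((w x)%:E * (phi N x + phi M x)) = I (fun x => phi N x + phi M x))%E by [].
  rewrite I_add ?IN ?IM ?adde0 //; try exact: phi_meas; by move=> x; exact: phi_ge0.
- by move=> x _; rewrite mule_ge0 // ?mule_ge0 ?phi_ge0 // lee_fin ?w_ge0.
- by apply: emeasurable_funM => //; exact: measurable_cst.
- by move=> x _; rewrite mule_ge0 ?adde_ge0 ?phi_ge0 // lee_fin ?w_ge0.
- exact: emeasurable_funM mwE mNM.
Qed.

Lemma m_eta_oo (t : R) : measurable [set x | 1 - t < eta_reg f1 f2 p1 p2 x < t].
Proof.
have := m_eta_itv `](1 - t), t[; congr measurable.
Qed.

Lemma mpf (p : R) (f : T -> R) : measurable_fun setT f -> measurable_fun setT (fun x => p * f x).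
Proof. by move=> mf; apply: measurable_funM => //; exact: measurable_cst. Qed.

Lemma Perr_le g (t : R) : is_classifier g -> 2^-1 <= t <= 1 ->
  probXU mu f1 f2 p1 p2 [set z | 1 - t < eta_reg f1 f2 p1 p2 z.1 < t /\ g z <> 0%N] = 0%E ->
  probXU mu f1 f2 p1 p2 [set z | g z = 1%N /\ p1 * f1 z.1 < p2 * f2 z.1] = 0%E ->
  probXU mu f1 f2 p1 p2 [set z | g z = 2%N /\ p2 * f2 z.1 < p1 * f1 z.1] = 0%E ->
  (Perr mu f1 f2 p1 p2 g <= (1 - t)%:E * Pnz mu f1 f2 p1 p2 g)%E.
Proof.
move=> [mg g2] /andP[t1 t2] hN1 hN3 hN4.
have mnz : measurable [set z : T * R | g z <> 0%N].
  by have := measurableC (mg 0%N); congr measurable.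
have mN1 : measurable [set z : T * R | 1 - t < eta_reg f1 f2 p1 p2 z.1 < t /\ g z <> 0%N].
  exact: (@mcylI (fun x => 1 - t < eta_reg f1 f2 p1 p2 x < t)) (m_eta_oo t) mnz.
have mN3 : measurable [set z : T * R | g z = 1%N /\ p1 * f1 z.1 < p2 * f2 z.1].
  exact: (@mcylI' (fun x => p1 * f1 x < p2 * f2 x)) _ (m_ltf _ _ (mpf _ _ mf1) (mpf _ _ mf2)) (mg 1%N).
have mN4 : measurable [set z : T * R | g z = 2%N /\ p2 * f2 z.1 < p1 * f1 z.1].
  exact: (@mcylI' (fun x => p2 * f2 x < p1 * f1 x)) _ (m_ltf _ _ (mpf _ _ mf2) (mpf _ _ mf1)) (mg 2%N).
rewrite (probXU_I _ mN1) in hN1; rewrite (probXU_I _ mN3) in hN3; rewrite (probXU_I _ mN4) in hN4.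
have t0 : 0 <= 1 - t by lra.
have a0 x : 0 <= p1 * f1 x by rewrite mulr_ge0 // ltW.
have b0 x : 0 <= p2 * f2 x by rewrite mulr_ge0 // ltW.
have B1 := bound_int (1 - t) (fun x => p2 * f2 x) _ _ _ t0 (mg 1%N) mN1 mN3 b0 (mpf _ _ mf2) hN1 hN3.
have B2 := bound_int (1 - t) (fun x => p1 * f1 x) _ _ _ t0 (mg 2%N) mN1 mN4 a0 (mpf _ _ mf1) hN1 hN4.
have mG1 := mg 1%N. have mG2 := mg 2%N.
have a0' x : (0 <= (p1 * f1 x)%:E)%E by rewrite lee_fin.
have b0' x : (0 <= (p2 * f2 x)%:E)%E by rewrite lee_fin.
have {}B1 := B1 _; have {}B2 := B2 _.
have P1 : (probYXU mu f1 f2 p1 p2 2 [set z | g z = 1%N] <= (1 - t)%:E * I (phi (g @^-1` [set 1%N])))%E.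
  rewrite pY2; apply: B1 => x.
  case: (leP (p2 * f2 x) ((1 - t) * w x)) => h.
  - apply: le_trans (leeDl _ _); last by rewrite mule_ge0 ?adde_ge0 ?phi_ge0 // lee_fin w_ge0.
    by rewrite muleA -EFinM lee_wpmul2r ?phi_ge0 // lee_fin.
  - apply: le_trans (leeDr _ _); last by rewrite mule_ge0 ?mule_ge0 ?phi_ge0 // lee_fin ?w_ge0.
    apply: (@le_trans _ _ ((p2 * f2 x)%:E * (phi [set z | (1 - t < eta_reg f1 f2 p1 p2 z.1 < t)%R /\ g z <> 0%N] x +
       phi [set z | g z = 1%N /\ (p1 * f1 z.1 < p2 * f2 z.1)%R] x))%E).
      rewrite lee_wpmul2l //; apply: phi_sub => // u /= gu.
      case: (ltP (p1 * f1 x) (p2 * f2 x)) => hab; [right|left]; split => //; last by rewrite gu.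
      rewrite /eta_reg; apply: key0 => //; rewrite /w in h; nra.
    by rewrite lee_wpmul2r ?adde_ge0 ?phi_ge0 // lee_fin /w; have := a0 x; lra.
have P2 : (probYXU mu f1 f2 p1 p2 1 [set z | g z = 2%N] <= (1 - t)%:E * I (phi (g @^-1` [set 2%N])))%E.
  rewrite pY1; apply: B2 => x.
  case: (leP (p1 * f1 x) ((1 - t) * w x)) => h.
  - apply: le_trans (leeDl _ _); last by rewrite mule_ge0 ?adde_ge0 ?phi_ge0 // lee_fin w_ge0.
    by rewrite muleA -EFinM lee_wpmul2r ?phi_ge0 // lee_fin.
  - apply: le_trans (leeDr _ _); last by rewrite mule_ge0 ?mule_ge0 ?phi_ge0 // lee_fin ?w_ge0.
    apply: (@le_trans _ _ ((p1 * f1 x)%:E * (phi [set z | (1 - t < eta_reg f1 f2 p1 p2 z.1 < t)%R /\ g z <> 0%N] x +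
       phi [set z | g z = 2%N /\ (p2 * f2 z.1 < p1 * f1 z.1)%R] x))%E).
      rewrite lee_wpmul2l //; apply: phi_sub => // u /= gu.
      case: (ltP (p2 * f2 x) (p1 * f1 x)) => hab; [right|left]; split => //; last by rewrite gu.
      rewrite /eta_reg; apply: key0 => //; rewrite /w in h; nra.
    by rewrite lee_wpmul2r ?adde_ge0 ?phi_ge0 // lee_fin /w; have := b0 x; lra.
rewrite /Perr; apply: le_trans (leeD P2 P1) _.
rewrite -ge0_muleDr; try (apply: integral_ge0 => x _; rewrite mule_ge0 ?phi_ge0 // lee_fin w_ge0).
rewrite /I -ge0_integralD //; try (by move=> x _; rewrite mule_ge0 ?phi_ge0 // lee_fin w_ge0);
  try (exact: emeasurable_funM mwE (phi_meas _ (mg _))).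
rewrite lee_wpmul2l ?lee_fin // /Pnz (probXU_I _ mnz).
apply: ge0_le_integral => //.
- by move=> x _; rewrite adde_ge0 // mule_ge0 ?phi_ge0 // lee_fin w_ge0.
- by apply: emeasurable_funD; exact: emeasurable_funM mwE (phi_meas _ (mg _)).
- exact: emeasurable_funM mwE (phi_meas _ mnz).
move=> x _; rewrite -ge0_muleDr ?phi_ge0 // lee_wpmul2l ?lee_fin ?w_ge0 //.
rewrite phi_disj //; last first.
  by apply/seteqP; split => z // [/= -> ].
apply: phi_mono => //; first exact: measurableU.
by move=> u /= [->|->].
all: by [].
Qed.


Lemma m_le (h : T -> R) (c : R) : measurable_fun setT h -> measurable [set x | h x <= c].
Proof.
move=> mh; have := mh measurableT; move=> /(_ _ (measurable_itv `]-oo, c])).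
by rewrite setTI; congr measurable; apply/seteqP; split => x /=; rewrite in_itv.
Qed.

Lemma tau_bound g (ga t dl : R) : is_classifier g -> P0 mu f1 f2 p1 p2 g = ga%:E ->
  probXU mu f1 f2 p1 p2 [set z | g z = 0%N /\ ~ (1 - t <= eta_reg f1 f2 p1 p2 z.1 <= t)] = 0%E ->
  t < 1 - dl ->
  (ga%:E + probX mu f1 f2 p1 p2
     [set x | (Num.min (eta_reg f1 f2 p1 p2 x) (1 - eta_reg f1 f2 p1 p2 x) <= dl)%R] <= 1)%E.
Proof.
move=> [mg _] hP0 hN2 tdl.
set eta := eta_reg f1 f2 p1 p2.
have mC : measurable [set x | 1 - t <= eta x <= t].
  have := m_eta_itv `[(1 - t), t]; congr measurable.
have mS : measurable [set x | (Num.min (eta x) (1 - eta x) <= dl)%R].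
  apply: (m_le (fun x => Num.min (eta x) (1 - eta x))).
  apply: measurable_minr; first exact: meta.
  by apply: measurable_funB; [exact: measurable_cst | exact: meta].
have mN2 : measurable [set z : T * R | g z = 0%N /\ ~ (1 - t <= eta z.1 <= t)].
  exact: (@mcylI' (fun x => ~ (1 - t <= eta x <= t))) _ (measurableC mC) (mg 0%N).
rewrite (probXU_I _ mN2) in hN2.
rewrite /P0 (probXU_I _ (mg 0%N)) in hP0.
rewrite probX_I // -hP0.
have h1 : (I (phi [set z | g z = 0%N]) <= I (phi [set z | (1 - t <= eta z.1 <= t)%R]))%E.
  apply: (@le_trans _ _ (I (fun x => phi [set z : T * R | g z = 0%N /\ ~ (1 - t <= eta z.1 <= t)%R] x
                                  + phi [set z | (1 - t <= eta z.1 <= t)%R] x)%E)).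
    apply: I_le.
    - exact: phi_meas _ (mg 0%N).
    - by apply: emeasurable_funD; [exact: phi_meas _ mN2 | exact: phi_meas _ (mcyl _ mC)].
    - by move=> x; exact: phi_ge0.
    - move=> x; apply: (phi_sub _ _ _ x (mg 0%N) mN2 (mcyl _ mC)).
      move=> u /= gu; case: (pselect (1 - t <= eta x <= t)) => h; [right|left] => //.
  rewrite I_add ?hN2 ?add0e //; try exact: phi_meas _ mN2; try exact: phi_meas _ (mcyl _ mC);
    by move=> x; exact: phi_ge0.
have mcC := mcyl _ mC. have mcS := mcyl _ mS.
apply: le_trans (leeD h1 (lexx _)) _.
rewrite -I_add; [|exact: phi_meas _ mcC | exact: phi_meas _ mcS
    | by move=> x; exact: phi_ge0 | by move=> x; exact: phi_ge0].
rewrite -I_one; apply: I_le.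
- by apply: emeasurable_funD; [exact: phi_meas _ mcC | exact: phi_meas _ mcS].
- exact: measurable_cst.
- by move=> x; rewrite adde_ge0 ?phi_ge0.
move=> x; rewrite (phi_disj _ _ x mcC mcS); first exact: (phi_le1 _ x (measurableU _ _ mcC mcS)).
apply/seteqP; split => z // [/= /andP[h1' h2] hm].
move: hm; rewrite ge_min => /orP[]; lra.
Qed.

Lemma probX_le1 S : measurable S -> (probX mu f1 f2 p1 p2 S <= 1)%E.
Proof.
move=> mS; rewrite probX_I // -I_one; apply: I_le.
- exact: phi_meas _ (mcyl _ mS).
- exact: measurable_cst.
- by move=> x; exact: phi_ge0.
- by move=> x; exact: (phi_le1 _ x (mcyl _ mS)).
Qed.

Lemma mS_meas dl : measurable [set x | (Num.min (eta_reg f1 f2 p1 p2 x) (1 - eta_reg f1 f2 p1 p2 x) <= dl)%R].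
Proof.
apply: (m_le (fun x => Num.min (eta_reg f1 f2 p1 p2 x) (1 - eta_reg f1 f2 p1 p2 x))).
apply: measurable_minr; first exact: meta.
by apply: measurable_funB; [exact: measurable_cst | exact: meta].
Qed.

Lemma Perr_ge0 g : (0 <= Perr mu f1 f2 p1 p2 g)%E.
Proof.
rewrite /Perr pY1 pY2 adde_ge0 //; apply: integral_ge0 => x _;
  by rewrite mule_ge0 ?phi_ge0 // lee_fin mulr_ge0 // ltW.
Qed.

Lemma Pnz_ge0 g : (0 <= Pnz mu f1 f2 p1 p2 g)%E.
Proof.
rewrite /Pnz /probXU pY1 pY2 adde_ge0 //; apply: integral_ge0 => x _;
  by rewrite mule_ge0 ?phi_ge0 // lee_fin mulr_ge0 // ltW.
Qed.

Lemma main_S (tau : R -> R) :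
  (forall eps : R, 0 < eps ->
     (0 < probX mu f1 f2 p1 p2
            [set x | (Num.min (eta_reg f1 f2 p1 p2 x) (1 - eta_reg f1 f2 p1 p2 x) <= eps)%R])%E) ->
  (forall gamma : R, 0 <= gamma < 1 ->
     is_threshold mu f1 f2 p1 p2 gamma (tau gamma)) ->
  tau x @[x --> (1:R)^'-] --> (1:R) /\
  Rcal mu f1 f2 p1 p2 x @[x --> (1:R)^'-] --> (0%:E : \bar R).
Proof.
move=> Hpos Hthr.
have Rle ga : 0 <= ga < 1 -> (0 <= Rcal mu f1 f2 p1 p2 ga)%E /\ (Rcal mu f1 f2 p1 p2 ga <= (1 - tau ga)%:E)%E.
  move=> hga; have [/andP[t1 t2] [g [cg [hP0 [hN1 [hN2 [hN3 hN4]]]]]]] := Hthr ga hga.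
  split.
    apply/ereal_infP => _ [g' _ <-]; rewrite /cond_err lee_fin divr_ge0 //.
      exact/fine_ge0/(Perr_ge0 g').
    exact/fine_ge0/(Pnz_ge0 g').
  apply: ge_ereal_inf; exists (cond_err mu f1 f2 p1 p2 g); first by exists g.
  have t12 : 2^-1 <= tau ga <= 1 by rewrite t1 t2.
  have hPe := Perr_le g (tau ga) cg t12 hN1 hN3 hN4.
  rewrite (Pnz_eq g ga cg hP0) -EFinM in hPe.
  rewrite /cond_err (Pnz_eq g ga cg hP0) /=.
  have ga1 : 0 < 1 - ga by case/andP: hga => _ ?; lra.
  move: hPe (Perr_ge0 g); case: (Perr mu f1 f2 p1 p2 g) => [r||] //=; rewrite !lee_fin => hr _.
  by rewrite ler_pdivrMr.
have tle ga : 0 <= ga < 1 -> tau ga <= 1 by move=> h; have [/andP[_ ->] _] := Hthr ga h.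
have near_tau e : 0 < e -> \forall x \near (1:R)^'-, (0 <= x < 1) /\ (1 - e <= tau x <= 1).
  move=> e0.
  pose S := [set x | (Num.min (eta_reg f1 f2 p1 p2 x) (1 - eta_reg f1 f2 p1 p2 x) <= e)%R].
  have hq : (0 < probX mu f1 f2 p1 p2 S)%E := Hpos e e0.
  have hq1 : (probX mu f1 f2 p1 p2 S <= 1)%E := probX_le1 _ (mS_meas e).
  have [r hr] : exists r, probX mu f1 f2 p1 p2 S = r%:E.
    by move: hq hq1; case: (probX mu f1 f2 p1 p2 S) => [r||] //= _ _; exists r.
  rewrite hr lte_fin in hq; rewrite hr lee_fin in hq1.
  near=> x.
  have x0 : 0 < x by near: x; apply: nbhs_left_gt; exact: ltr01.
  have x1 : x < 1 by near: x; exact: nbhs_left_lt.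
  have xr : 1 - r < x by near: x; apply: nbhs_left_gt; lra.
  have hx : 0 <= x < 1 by rewrite x1 ltW.
  split => //; rewrite tle // andbT.
  rewrite leNgt; apply/negP => ht.
  have [_ [g [cg [hP0 [_ [hN2 _]]]]]] := Hthr x hx.
  have := tau_bound g x (tau x) e cg hP0 hN2 ht.
  rewrite -/S hr -EFinD lee_fin; lra.
Unshelve. all: try by end_near.
split.
  apply/cvgrPdist_le => e e0; have := near_tau e e0; apply: filterS => x [_ /andP[h1 h2]].
  rewrite ger0_norm; lra.
apply: cvg_EFin.
  have := near_tau 1 ltr01; apply: filterS => x [hx _]; have [R0 R1] := Rle x hx.
  by rewrite ge0_fin_numE //; exact: le_lt_trans R1 (ltry _).
apply/cvgrPdist_le => e e0; have := near_tau e e0; apply: filterS => x [hx /andP[h1 h2]].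
have [R0 R1] := Rle x hx; move: R0 R1 => /=.
case: (Rcal mu f1 f2 p1 p2 x) => [r||] //=; rewrite !lee_fin => r0 r1.
rewrite sub0r normrN ger0_norm //; lra.
Qed.




End S.

Theorem lemma1 (d : measure_display) (T : measurableType d) (R : realType)
  (mu : {measure set T -> \bar R}) (f1 f2 : T -> R) (p1 p2 : R) (tau : R -> R) :
  sigma_finite setT mu ->
  measurable_fun setT f1 -> measurable_fun setT f2 ->
  (forall x, 0 <= f1 x) -> (forall x, 0 <= f2 x) ->
  (\int[mu]_x (f1 x)%:E = 1)%E -> (\int[mu]_x (f2 x)%:E = 1)%E ->
  (exists A : set T, measurable A /\
     (\int[mu]_(x in A) (f1 x)%:E != \int[mu]_(x in A) (f2 x)%:E)%E) ->
  0 < p1 -> 0 < p2 -> p1 + p2 = 1 ->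
  (forall eps : R, 0 < eps ->
     (0 < probX mu f1 f2 p1 p2
            [set x | (Num.min (eta_reg f1 f2 p1 p2 x) (1 - eta_reg f1 f2 p1 p2 x) <= eps)%R])%E) ->
  (forall gamma : R, 0 <= gamma < 1 ->
     is_threshold mu f1 f2 p1 p2 gamma (tau gamma)) ->
  tau x @[x --> (1:R)^'-] --> (1:R) /\
  Rcal mu f1 f2 p1 p2 x @[x --> (1:R)^'-] --> (0%:E : \bar R).
Proof.
move=> _ mf1 mf2 f1ge0 f2ge0 int1 int2 _ p1gt0 p2gt0 p12 Hpos Hthr.
apply: main_S; by [].
Qed.
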